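(* Let $X$ and $Y$ be sequence classes such that $\alpha_{X,Y}$ is a reasonable quasi-norm (on $E\otimes F$ for all Banach spaces $E,F$). If $X$ and $Y$ are linearly stable and finitely injective, then $\alpha_{X,Y}$ is a tensor quasi-norm.
   Context: All Banach spaces are over $\mathbb{K}=\mathbb{R}$ or $\mathbb{C}$. A sequence class is a rule $X$ assigning to each Banach space $E$ a Banach space $X(E)$ which is a vector subspace of $E^{\mathbb{N}}$ (coordinatewise operations) with $c_{00}(E)\subseteq X(E)$, $\|(x_j)\|_\infty\le\|(x_j)\|_{X(E)}$, and $\|x\cdot e_j\|_{X(E)}=\|x\|_E$ ($x$ in the $j$-th coordinate, zeros elsewhere). $(x_j)_{j=1}^n$ denotes $(x_1,\dots,x_n,0,0,\dots)$. $X$ is linearly stable if for all Banach spaces $E,F$ and every bounded linear $T\colon E\to F$, $(T x_j)\in X(F)$ whenever $(x_j)\in X(E)$ and the induced map $X(E)\to X(F)$ has norm $\|T\|$. $X$ is finitely injective if $\|(x_j)_{j=1}^k\|_{X(E)}\le\|(i(x_j))_{j=1}^k\|_{X(F)}$ whenever $i\colon E\to F$ is a linear isometric embedding, $k\in\mathbb{N}$, $x_1,\dots,x_k\in E$. For $u\in E\otimes F$, $\alpha_{X,Y}(u)=\inf\{\|(x_j)_{j=1}^n\|_{X(E)}\|(y_j)_{j=1}^n\|_{Y(F)}:u=\sum_{j=1}^nx_j\otimes y_j\}$. A quasi-norm $\alpha$ on $E\otimes F$ is reasonable if $\varepsilon\le\alpha$ ($\varepsilon$ the injective tensor norm) and $\alpha(x\otimes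 y)\le\|x\|\|y\|$. A reasonable quasi-norm $\alpha$ (defined on all $E\otimes F$) is a tensor quasi-norm if it is uniform: $\|T_1\otimes T_2\colon E_1\otimes_\alpha E_2\to F_1\otimes_\alpha F_2\|\le\|T_1\|\|T_2\|$ for all bounded linear $T_i\colon E_i\to F_i$; and finitely generated: $\alpha(u;E\otimes F)=\inf\{\alpha(u;M\otimes N):u\in M\otimes N,\ M,N$ finite-dimensional subspaces of $E,F\}$. *)

(* Defs.v *)
(* Banach spaces over K = R or C are
   [completeNormedModType K] with K := scalar_field R b (b = true: K = R,
   b = false: K = R[i] = complex numbers over R). *)
From HB Require Import structures.
From mathcomp Require Import all_boot all_order all_algebra.
From mathcomp Require Import all_classical all_reals all_analysis.
From mathcomp.real_closed Require Import complex.

Set Implicit Arguments.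
Unset Strict Implicit.
Unset Printing Implicit Defensive.

Import Order.TTheory GRing.Theory Num.Theory.
Local Open Scope ring_scope.

Definition scalar_field (R : realType) (b : bool) : numFieldType :=
  if b then (R : numFieldType) else (complex R : numFieldType).

Section Defs.
Variable K : numFieldType.

Notation Banach := (completeNormedModType K).

Definition seq_unit (E : Banach) (x : E) (j : nat) : nat -> E :=
  fun i => if i == j then x else 0.

(* (x_j)_{j=1}^k = (x_1, ..., x_k, 0, 0, ...) (indices shifted to start at 0) *)
Definition seq_trunc (E : Banach) (k : nat) (x : nat -> E) : nat -> E :=
  fun i => if (i < k)%N then x i else 0.

Definition bounded_by (E F : Banach) (T : E -> F) (c : K) : Prop :=
  0 <= c /\ forall x, `|T x| <= c * `|x|.

Record seq_class := SeqClass {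
  sc_mem : forall E : Banach, (nat -> E) -> Prop;
  sc_norm : forall E : Banach, (nat -> E) -> K;
  sc_mem0 : forall E : Banach, sc_mem (fun _ => (0 : E));
  sc_memD : forall (E : Banach) (x y : nat -> E),
      sc_mem x -> sc_mem y -> sc_mem (fun j => x j + y j);
  sc_memZ : forall (E : Banach) (a : K) (x : nat -> E),
      sc_mem x -> sc_mem (fun j => a *: x j);
  sc_normD : forall (E : Banach) (x y : nat -> E),
      sc_mem x -> sc_mem y -> sc_norm (fun j => x j + y j) <= sc_norm x + sc_norm y;
  sc_normZ : forall (E : Banach) (a : K) (x : nat -> E),
      sc_mem x -> sc_norm (fun j => a *: x j) = `|a| * sc_norm x;
  sc_norm_eq0 : forall (E : Banach) (x : nat -> E),
      sc_mem x -> sc_norm x = 0 -> x = (fun _ => 0);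
  sc_complete : forall (E : Banach) (s : nat -> nat -> E),
      (forall n, sc_mem (s n)) ->
      (forall e : K, 0 < e -> exists N, forall m n, (N <= m)%N -> (N <= n)%N ->
           sc_norm (fun j => s m j - s n j) < e) ->
      exists l, sc_mem l /\
        (forall e : K, 0 < e -> exists N, forall n, (N <= n)%N ->
           sc_norm (fun j => s n j - l j) < e);
  sc_c00 : forall (E : Banach) (x : nat -> E),
      (exists n, forall j, (n <= j)%N -> x j = 0) -> sc_mem x;
  sc_sup_le : forall (E : Banach) (x : nat -> E),
      sc_mem x -> forall j, `|x j| <= sc_norm x;
  sc_norm_unit : forall (E : Banach) (x : E) (j : nat),
      sc_norm (seq_unit x j) = `|x|
}.

(* Linear stability: for every bounded linear T : E -> F, (T x_j) in X(F)
   whenever (x_j) in X(E), and the induced map has norm <= ||T||, i.e.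
   ||(T x_j)||_X(F) <= c ||(x_j)||_X(E) for every bound c of T.
   (The reverse inequality ||induced|| >= ||T|| is automatic from
   sc_norm_unit.) *)
Definition linearly_stable (X : seq_class) : Prop :=
  forall (E F : Banach) (T : {linear E -> F}) (c : K), bounded_by T c ->
  forall x : nat -> E, sc_mem X x ->
    sc_mem X (fun j => T (x j)) /\
    sc_norm X (fun j => T (x j)) <= c * sc_norm X x.

Definition isometric_embedding (E F : Banach) (i : {linear E -> F}) : Prop :=
  forall x, `|i x| = `|x|.

Definition finitely_injective (X : seq_class) : Prop :=
  forall (E F : Banach) (i : {linear E -> F}), isometric_embedding i ->
  forall (k : nat) (x : nat -> E),
    sc_norm X (seq_trunc k x) <= sc_norm X (seq_trunc k (fun j => i (x j))).

(* An element u = sum_j x_j (x) y_j of E (x) F is given by a representation,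
   i.e. a finite list of pairs (x_j, y_j). *)
Definition rep (E F : Banach) := seq (E * F).

Definition bilinear_form (E F : Banach) (B : E -> F -> K) : Prop :=
  (forall (a : K) (x x' : E) (y : F), B (a *: x + x') y = a * B x y + B x' y) /\
  (forall (a : K) (x : E) (y y' : F), B x (a *: y + y') = a * B x y + B x y').

(* Two representations define the same tensor iff every bilinear form on
   E x F takes the same value on them (universal property of E (x) F). *)
Definition teq (E F : Banach) (s t : rep E F) : Prop :=
  forall B : E -> F -> K, bilinear_form B ->
    \sum_(p <- s) B p.1 p.2 = \sum_(p <- t) B p.1 p.2.

Definition rep_xs (E F : Banach) (s : rep E F) : nat -> E :=
  fun j => nth 0 (map fst s) j.
Definition rep_ys (E F : Banach) (s : rep E F) : nat -> F :=
  fun j => nth 0 (map snd s) j.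

Definition rep_scale (E F : Banach) (a : K) (s : rep E F) : rep E F :=
  map (fun p => (a *: p.1, p.2)) s.

Definition rep_map (E1 E2 F1 F2 : Banach) (T1 : E1 -> F1) (T2 : E2 -> F2)
  (s : rep E1 E2) : rep F1 F2 := map (fun p => (T1 p.1, T2 p.2)) s.

Section Alpha.
Variables X Y : seq_class.

Definition rep_cost (E F : Banach) (t : rep E F) : K :=
  sc_norm X (rep_xs t) * sc_norm Y (rep_ys t).

(* alpha_le s c  <->  alpha_{X,Y}(u) <= c, where u is the tensor represented
   by s; i.e. inf { ||(x_j)||_X ||(y_j)||_Y : u = sum x_j (x) y_j } <= c. *)
Definition alpha_le (E F : Banach) (s : rep E F) (c : K) : Prop :=
  forall e : K, 0 < e -> exists t : rep E F, teq s t /\ rep_cost t < c + e.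

Definition alpha_quasinorm (E F : Banach) : Prop :=
  exists C : K, 1 <= C /\
  [/\ alpha_le ([::] : rep E F) 0,
      (forall s : rep E F, alpha_le s 0 -> teq s [::]),
      (forall (a : K) (s : rep E F) (c : K),
          alpha_le s c -> alpha_le (rep_scale a s) (`|a| * c)) &
      (forall (s1 s2 : rep E F) (c1 c2 : K),
          alpha_le s1 c1 -> alpha_le s2 c2 -> alpha_le (s1 ++ s2) (C * (c1 + c2)))].

(* reasonable: eps <= alpha and alpha(x (x) y) <= ||x|| ||y||.
   eps(u) = sup { |sum_j phi(x_j) psi(y_j)| : phi in B_{E'}, psi in B_{F'} };
   eps(u) <= alpha(u) iff for all such phi, psi and every representation t
   of u, |sum phi(x_j) psi(y_j)| <= ||(x_j)||_X ||(y_j)||_Y. *)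
Definition alpha_reasonable (E F : Banach) : Prop :=
  (forall (phi : {linear E -> K^o}) (psi : {linear F -> K^o}),
      (forall x, `|phi x| <= `|x|) -> (forall y, `|psi y| <= `|y|) ->
      forall t : rep E F,
        `|\sum_(p <- t) ((phi p.1 : K) * (psi p.2 : K))| <= rep_cost t) /\
  (forall (x : E) (y : F), alpha_le [:: (x, y)] (`|x| * `|y|)).

Definition alpha_reasonable_quasinorm : Prop :=
  forall E F : Banach, alpha_quasinorm E F /\ alpha_reasonable E F.

Definition alpha_uniform : Prop :=
  forall (E1 E2 F1 F2 : Banach) (T1 : {linear E1 -> F1}) (T2 : {linear E2 -> F2})
         (c1 c2 : K),
    bounded_by T1 c1 -> bounded_by T2 c2 ->
    forall (s : rep E1 E2) (c : K),
      alpha_le s c -> alpha_le (rep_map T1 T2 s) (c1 * c2 * c).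

Definition finite_dimensional (M : Banach) : Prop :=
  exists b : seq M, forall m : M, exists a : nat -> K,
    m = \sum_(i < size b) a i *: b`_i.

(* finitely generated: alpha(u; E (x) F) = inf { alpha(u; M (x) N) : u in M (x) N,
   M, N finite-dimensional subspaces of E, F }.  A finite-dimensional subspace
   M of E (with the induced norm) is given as a finite-dimensional Banach space
   M with an isometric linear embedding i : M -> E; "u in M (x) N" means u is the
   image under i (x) j of some u' in M (x) N. *)
Definition alpha_finitely_generated : Prop :=
  forall (E F : Banach) (s : rep E F),
    (forall (M N : Banach) (i : {linear M -> E}) (j : {linear N -> F})
            (s' : rep M N) (c : K),
       finite_dimensional M -> finite_dimensional N ->
       isometric_embedding i -> isometric_embedding j ->
       teq (rep_map i j s') s -> alpha_le s' c -> alpha_le s c) /\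
    (forall c : K, alpha_le s c -> forall e : K, 0 < e ->
       exists (M N : Banach) (i : {linear M -> E}) (j : {linear N -> F})
              (s' : rep M N),
         [/\ finite_dimensional M /\ finite_dimensional N,
             isometric_embedding i /\ isometric_embedding j,
             teq (rep_map i j s') s & alpha_le s' (c + e)]).

Definition alpha_tensor_quasinorm : Prop :=
  [/\ alpha_reasonable_quasinorm, alpha_uniform & alpha_finitely_generated].

End Alpha.
End Defs.

(* Main.v *)
From HB Require Import structures.
Require Import Defs.
From mathcomp Require Import all_boot all_order all_algebra.
From mathcomp Require Import all_classical all_reals all_analysis.
From mathcomp.real_closed Require Import complex.
From mathcomp Require Import ring.

Set Implicit Arguments.
Unset Strict Implicit.
Unset Printing Implicit Defensive.
Import Order.TTheory GRing.Theory Num.Theory.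
Import numFieldNormedType.Exports.
Local Open Scope classical_set_scope.
Local Open Scope ring_scope.


Section Gen.
Variable K : numFieldType.
Notation Banach := (completeNormedModType K).

Lemma teq_sym (E F : Banach) (s t : rep E F) : teq s t -> teq t s.
Proof. by move=> h B hB; rewrite (h B hB). Qed.

Lemma teq_trans (E F : Banach) (s t u : rep E F) : teq s t -> teq t u -> teq s u.
Proof. by move=> h1 h2 B hB; rewrite (h1 B hB) (h2 B hB). Qed.

Lemma teq_refl (E F : Banach) (s : rep E F) : teq s s.
Proof. by []. Qed.

Lemma teq_map (E1 E2 F1 F2 : Banach) (T1 : {linear E1 -> F1}) (T2 : {linear E2 -> F2})
  (s t : rep E1 E2) : teq s t -> teq (rep_map T1 T2 s) (rep_map T1 T2 t).
Proof.
move=> h B [hB1 hB2]; rewrite /rep_map !big_map /=.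
apply: (h (fun x y => B (T1 x) (T2 y))); split.
- by move=> a x x' y; rewrite linearP hB1.
- by move=> a x y y'; rewrite linearP hB2.
Qed.

Lemma nth_map0 (A B : zmodType) (f : A -> B) (l : seq A) j :
  f 0 = 0 -> nth 0 (map f l) j = f (nth 0 l j).
Proof.
move=> f0; case: (ltnP j (size l)) => hj; first by rewrite (nth_map 0).
by rewrite !nth_default ?size_map.
Qed.

Lemma rep_xs_map (E1 E2 F1 F2 : Banach) (T1 : {linear E1 -> F1}) (T2 : {linear E2 -> F2})
  (s : rep E1 E2) : rep_xs (rep_map T1 T2 s) = (fun j => T1 (rep_xs s j)).
Proof.
apply: funext => j; rewrite /rep_xs /rep_map -map_comp.
by rewrite (_ : (fst \o _) = T1 \o fst) // map_comp nth_map0 // linear0.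
Qed.

Lemma rep_ys_map (E1 E2 F1 F2 : Banach) (T1 : {linear E1 -> F1}) (T2 : {linear E2 -> F2})
  (s : rep E1 E2) : rep_ys (rep_map T1 T2 s) = (fun j => T2 (rep_ys s j)).
Proof.
apply: funext => j; rewrite /rep_ys /rep_map -map_comp.
by rewrite (_ : (snd \o _) = T2 \o snd) // map_comp nth_map0 // linear0.
Qed.

Lemma rep_xs_mem (X : seq_class K) (E F : Banach) (s : rep E F) : sc_mem X (rep_xs s).
Proof.
apply: sc_c00; exists (size s) => j hj.
by rewrite /rep_xs nth_default // size_map.
Qed.

Lemma rep_ys_mem (X : seq_class K) (E F : Banach) (s : rep E F) : sc_mem X (rep_ys s).
Proof.
apply: sc_c00; exists (size s) => j hj.
by rewrite /rep_ys nth_default // size_map.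
Qed.

Lemma sc_norm_ge0 (X : seq_class K) (E : Banach) (x : nat -> E) :
  sc_mem X x -> 0 <= sc_norm X x.
Proof. by move=> h; apply: le_trans (sc_sup_le h 0). Qed.

Lemma alpha_le_teq (X Y : seq_class K) (E F : Banach) (s s' : rep E F) c :
  alpha_le X Y s c -> teq s s' -> alpha_le X Y s' c.
Proof.
move=> h hs e e0; have [t [ht hc]] := h e e0; exists t; split => //.
exact: teq_trans (teq_sym hs) ht.
Qed.

Lemma uniform_gen (X Y : seq_class K) : linearly_stable X -> linearly_stable Y ->
  alpha_uniform X Y.
Proof.
move=> LX LY E1 E2 F1 F2 T1 T2 c1 c2 hT1 hT2 s c hs e e0.
have c1p := hT1.1; have c2p := hT2.1.
set k := c1 * c2.
have k0 : 0 <= k by rewrite mulr_ge0.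
have k1 : 0 < k + 1 by rewrite ltr_wpDl.
have [t [ht hc]] := hs (e / (k + 1)) (divr_gt0 e0 k1).
exists (rep_map T1 T2 t); split; first exact: teq_map.
rewrite /rep_cost rep_xs_map rep_ys_map.
have [m1 n1] := LX _ _ T1 c1 hT1 _ (rep_xs_mem X t).
have [m2 n2] := LY _ _ T2 c2 hT2 _ (rep_ys_mem Y t).
apply: (le_lt_trans (y := k * rep_cost X Y t)).
  rewrite /k /rep_cost.
  rewrite (_ : c1 * c2 * _ = (c1 * sc_norm X (rep_xs t)) * (c2 * sc_norm Y (rep_ys t))); last by ring.
  by apply: ler_pM => //; apply: sc_norm_ge0.
apply: (le_lt_trans (y := k * (c + e / (k + 1)))).
  by apply: ler_wpM2l => //; apply: ltW.
rewrite mulrDr ltrD2l.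
rewrite mulrA ltr_pdivrMr // mulrDr mulr1 mulrC.
by rewrite ltrDl.
Qed.

End Gen.


Section Span.
Variable K : numFieldType.
Variable E : normedModType K.

Definition span (vs : seq E) : set E :=
  fun x => exists a : nat -> K, x = \sum_(i < size vs) a i *: vs`_i.

Lemma span0 vs : span vs 0.
Proof. by exists (fun _ => 0); rewrite big1 // => i _; rewrite scale0r. Qed.

Lemma spanD vs x y : span vs x -> span vs y -> span vs (x + y).
Proof.
move=> [a ->] [b ->]; exists (fun i => a i + b i).
by rewrite -big_split; apply: eq_bigr => i _; rewrite scalerDl.
Qed.

Lemma spanZ vs c x : span vs x -> span vs (c *: x).
Proof.
move=> [a ->]; exists (fun i => c * a i).
by rewrite scaler_sumr; apply: eq_bigr => i _; rewrite scalerA.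
Qed.

Lemma span_nth vs k : span vs vs`_k.
Proof.
case: (ltnP k (size vs)) => hk; last by rewrite nth_default //; apply: span0.
exists (fun i => (i == k)%:R).
rewrite (bigD1 (Ordinal hk)) //= eqxx scale1r big1 ?addr0 // => i hi.
rewrite (_ : (nat_of_ord i == k) = false) ?scale0r //; apply/negbTE.
by move: hi; apply: contra => /eqP h; apply/eqP/val_inj.
Qed.

Lemma span_cons v vs x :
  span (v :: vs) x <-> exists a y, span vs y /\ x = a *: v + y.
Proof.
split.
  move=> [a ->]; exists (a 0%N), (\sum_(i < size vs) a i.+1 *: vs`_i); split.
    by exists (fun i => a i.+1).
  by rewrite /= big_ord_recl /=; congr (_ + _); apply: eq_bigr => i _; rewrite lift0.
move=> [a [y [[b ->] ->]]]; exists (fun i => if i is j.+1 then b j else a).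
by rewrite /= big_ord_recl /=; congr (_ + _); apply: eq_bigr => i _; rewrite lift0.
Qed.

Definition mclosed (A : set E) :=
  forall x, (forall e : K, 0 < e -> exists w, A w /\ `|x - w| < e) -> A x.

Lemma posmin (e1 e2 : K) : 0 < e1 -> 0 < e2 -> exists2 e, 0 < e & e <= e1 /\ e <= e2.
Proof.
move=> h1 h2; have /orP[h|h] := real_leVge (gtr0_real h1) (gtr0_real h2).
  by exists e1.
by exists e2.
Qed.

Lemma norm_small (x : E) : (forall e : K, 0 < e -> `|x| < e) -> x = 0.
Proof.
move=> h; apply/eqP; apply: contraT => hx.
have hp : 0 < `|x| by rewrite normr_gt0.
by have := h _ hp; rewrite ltxx.
Qed.

Lemma lmod_id (x w y : E) (a a0 : K) :
  x - a0 *: w - y = (x - (a *: w + y)) + (a - a0) *: w.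
Proof.
by rewrite scalerBl opprD !addrA (addrAC (x - a *: w)) subrK addrAC.
Qed.


Hypothesis Kc : forall G : set_system K, ProperFilter G -> cauchy G ->
  exists l : K, G --> l.

Lemma span_nil x : span [::] x -> x = 0.
Proof. by move=> [a ->]; rewrite big_ord0. Qed.

Lemma key_ineq vs v (d : K) : 0 < d -> (forall z, span vs z -> d <= `|v - z|) ->
  forall a y, span vs y -> `|a| * d <= `|a *: v + y|.
Proof.
move=> d0 hd a y hy; have [->|a0] := eqVneq a 0.
  by rewrite normr0 mul0r.
have -> : a *: v + y = a *: (v - (- (a^-1 *: y))).
  by rewrite opprK scalerDr scalerA mulfV // scale1r.
rewrite normrZ; apply: ler_wpM2l => //; apply: hd.
by rewrite -scaleNr; apply: spanZ.
Qed.

Lemma span_mclosed vs : mclosed (span vs).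
Proof.
elim: vs => [|v vs IH] x hx.
  suff -> : x = 0 by apply: span0.
  apply: norm_small => e e0; have [w [/span_nil -> h]] := hx e e0.
  by rewrite subr0 in h.
have [hv|hv] := pselect (span vs v).
  suff hxs : span vs x.
    by apply/span_cons; exists 0, x; split => //; rewrite scale0r add0r.
  apply: IH => e e0; have [w [/span_cons [a [y [hy ->]]] h]] := hx e e0.
  by exists (a *: v + y); split => //; apply: spanD => //; apply: spanZ.
have [d d0 hd] : exists2 d : K, 0 < d & forall z, span vs z -> d <= `|v - z|.
  apply: contrapT => hn; apply: hv; apply: IH => e e0.
  apply: contrapT => hw; apply: hn; exists e => // z hz.
  rewrite (real_leNgt (gtr0_real e0) (ger0_real (normr_ge0 _))).
  by apply/negP => hlt; apply: hw; exists z.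
pose G : set_system K := fun P => exists2 e : K, 0 < e &
  forall a y, span vs y -> `|x - (a *: v + y)| < e -> P a.
have GF : Filter G.
  split.
  - by exists 1.
  - move=> P Q [e1 e1p h1] [e2 e2p h2]; have [e3 ep [he1 he2]] := posmin e1p e2p.
    exists e3 => // a y hy hlt; split.
      by apply: (h1 a y hy); apply: lt_le_trans he1.
    by apply: (h2 a y hy); apply: lt_le_trans he2.
  - by move=> P Q PQ [e ep h]; exists e => // a y hy hlt; apply: PQ; apply: h hlt.
have GP : ProperFilter G.
  split => //; move=> [e ep h].
  have [w [/span_cons [a [y [hy ->]]] hw]] := hx e ep.
  exact: (h a y hy hw).
have GC : cauchy G.
  apply/cauchy_ballP => e e0.
  pose A := fun a : K => exists y, span vs y /\ `|x - (a *: v + y)| < e * d / 2.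
  have GA : G A.
    exists (e * d / 2); first by rewrite divr_gt0 // mulr_gt0.
    by move=> a y hy hlt; exists y.
  exists (A, A) => //= -[a b] [[y [hy ha]] [y' [hy' hb]]] /=.
  rewrite /ball /= -(ltr_pM2r d0).
  apply: le_lt_trans (key_ineq d0 hd (a - b) (spanD hy (spanZ (-1) hy'))) _.
  have -> : (a - b) *: v + (y + (-1) *: y') =
      (x - (b *: v + y')) - (x - (a *: v + y)).
    have -> : (x - (b *: v + y')) - (x - (a *: v + y)) = (a *: v + y) - (b *: v + y').
      by rewrite opprB addrC addrA subrK.
    by rewrite scaleN1r scalerBl opprD addrACA.
  apply: le_lt_trans (ler_normB _ _) _.
  by rewrite (splitr (e * d)) ltrD.
have [a0 Ga0] := Kc GP GC.
suff hs : span vs (x - a0 *: v).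
  by apply/span_cons; exists a0, (x - a0 *: v); split => //; rewrite addrC subrK.
apply: IH => eps eps0.
have nv : 0 < `|v| + 1 by rewrite ltr_wpDl.
pose eps' := eps / 2 / (`|v| + 1).
have eps'0 : 0 < eps' by rewrite !divr_gt0.
have [e1 e1p h1] := Ga0 _ (nbhsx_ballx a0 eps' eps'0).
have [e e0 [he1 he2]] := posmin e1p (divr_gt0 eps0 (ltr0Sn K 1)).
have [w [/span_cons [a [y [hy ->]]] hw]] := hx e e0.
have ha := h1 a y hy (lt_le_trans hw he1).
exists y; split => //.
rewrite (lmod_id x v y a a0).
apply: le_lt_trans (ler_normD _ _) _.
rewrite (splitr eps); apply: ltr_leD; first exact: lt_le_trans hw he2.
rewrite normrZ; apply: (le_trans (y := eps' * (`|v| + 1))).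
  apply: (le_trans (y := eps' * `|v|)).
    apply: ler_wpM2r => //; apply: ltW; move: ha; rewrite /ball /= distrC //.
  by apply: ler_wpM2l; [apply: ltW | rewrite lerDl].
by rewrite /eps' divfK // gt_eqF.
Qed.

End Span.


Section Sub.
Variable K : numFieldType.
Variable E : completeNormedModType K.
Variable vs : seq E.

Definition spanb : pred E := fun x => `[< span vs x >].

Lemma spanbP x : x \in spanb <-> span vs x.
Proof.
rewrite unfold_in /spanb /=.
split; [by move/asboolP | by move=> h; apply/asboolP]. Qed.

Lemma spanb_closed : GRing.subsemimod_closed spanb.
Proof.
split; first split.
- by apply/spanbP; apply: span0.
- by move=> x y /spanbP hx /spanbP hy; apply/spanbP; apply: spanD.
- by move=> a x /spanbP hx; apply/spanbP; apply: spanZ.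
Qed.

HB.instance Definition _ := GRing.isSubmodClosed.Build K E spanb spanb_closed.

Record sub := Sub { sval : E; sprop : sval \in spanb }.
HB.instance Definition _ := [isSub for sval].
HB.instance Definition _ := [Choice of sub by <:].
HB.instance Definition _ := [SubChoice_isSubLmodule of sub by <:].

Definition snorm (m : sub) : K := `|sval m|.

Lemma svalD (x y : sub) : sval (x + y) = sval x + sval y.
Proof. by []. Qed.
Lemma svalZ a (x : sub) : sval (a *: x) = a *: sval x.
Proof. by []. Qed.
Lemma sval0 : sval 0 = 0.
Proof. by []. Qed.

Lemma snormD x y : snorm (x + y) <= snorm x + snorm y.
Proof. by rewrite /snorm svalD ler_normD. Qed.
Lemma snormZ (l : K) x : snorm (l *: x) = `|l| * snorm x.
Proof. by rewrite /snorm svalZ normrZ. Qed.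
Lemma snorm0 x : snorm x = 0 -> x = 0.
Proof. by move=> /normr0_eq0 h; apply: val_inj; rewrite /= h. Qed.

HB.instance Definition _ := Lmodule_isNormed.Build K sub snormD snormZ snorm0.


Hypothesis Kc : forall G : set_system K, ProperFilter G -> cauchy G ->
  exists l : K, G --> l.

Lemma sub_complete (F : set_system sub) : ProperFilter F -> cauchy F -> cvg F.
Proof.
move=> FF Fc.
pose G := sval @ F.
have GP : ProperFilter G by apply: fmap_proper_filter.
have Gc : cauchy G.
  apply/(cauchyP G) => eps eps0.
  have [p Fp] := (proj1 (cauchyP F) Fc) eps eps0.
  exists (sval p); rewrite /G /=.
  apply: filterS Fp => q; rewrite /= -!ball_normE /ball_ /=. by [].
have [x Gx] := (cvg_ex G).1 (cauchy_cvg G Gc).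
have hx : span vs x.
  apply: (span_mclosed Kc) => e e0.
  have [q hq] := @filter_ex _ F FF _ (Gx _ (nbhsx_ballx x e e0)).
  exists (sval q); split; [apply/spanbP; apply: sprop | ]. move: hq; rewrite /= -!ball_normE /ball_ /=. by [].
apply: (cvgP (Sub (proj2 (spanbP x) hx))).
move=> P /nbhs_ballP [eps eps0 hP].
have h : F (sval @^-1` ball x eps) := Gx _ (nbhsx_ballx x eps eps0).
change (F P); apply: (filterS _ h) => q hq; apply: hP.
by move: hq; rewrite /= -!ball_normE /ball_ /=.
Qed.

HB.instance Definition _ := Uniform_isComplete.Build sub sub_complete.

Lemma sval_lin : linear sval.
Proof. by move=> a x y. Qed.
HB.instance Definition _ := GRing.isLinear.Build K sub E *:%R sval sval_lin.

Definition fsub (k : nat) : sub := Sub (proj2 (spanbP vs`_k) (span_nth vs k)).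

Lemma fin_sub_aux : exists (M : completeNormedModType K) (i : {linear M -> E})
  (f : nat -> M), [/\ finite_dimensional M, isometric_embedding i &
  forall k, i (f k) = vs`_k].
Proof.
exists sub, sval, fsub; split.
- exists (mkseq fsub (size vs)) => m.
  have [a ha] := proj1 (spanbP _) (sprop m).
  exists a; apply: val_inj; rewrite /= ha linear_sum /=.
  rewrite size_mkseq; apply: eq_bigr => i _.
  by rewrite nth_mkseq.
- by move=> x.
- by [].
Qed.
End Sub.


Lemma Kc_real (R : realType) : forall G : set_system (scalar_field R true),
  ProperFilter G -> cauchy G -> exists l : scalar_field R true, G --> l.
Proof.
move=> G GP Gc; apply/cvg_ex.
exact: (@R_complete R G GP Gc).
Qed.

Section Cplx.
Variable R : realType.
Local Notation C := (complex R).
Local Open Scope complex_scope.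

Lemma normc_geRe (z : C) : (`|complex.Re z|)%:C <= `|z|.
Proof.
rewrite normc_def lecR -sqrtr_sqr; apply: ler_wsqrtr.
by rewrite lerDl sqr_ge0.
Qed.

Lemma normc_geIm (z : C) : (`|complex.Im z|)%:C <= `|z|.
Proof.
rewrite normc_def lecR -sqrtr_sqr; apply: ler_wsqrtr.
by rewrite lerDr sqr_ge0.
Qed.

Lemma normc_leReIm (z : C) : `|z| <= (`|complex.Re z| + `|complex.Im z|)%:C.
Proof.
rewrite normc_def lecR.
rewrite -[X in _ <= X]ger0_norm ?addr_ge0 // -sqrtr_sqr; apply: ler_wsqrtr.
rewrite sqrrD !real_normK ?num_real // -addrA lerD2l lerDr.
by rewrite mulrn_wge0 // mulr_ge0.
Qed.


Lemma ReB (z w : complex R) : complex.Re (z - w) = complex.Re z - complex.Re w.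
Proof. by case: z; case: w. Qed.
Lemma ImB (z w : complex R) : complex.Im (z - w) = complex.Im z - complex.Im w.
Proof. by case: z; case: w. Qed.

Lemma complex_eta (z : complex R) : complex.Im z = 0 -> z = (complex.Re z)%:C.
Proof. by case: z => a b /= ->. Qed.

Lemma Kc_cplx (G : set_system (scalar_field R false)) : ProperFilter G -> cauchy G ->
  exists l : scalar_field R false, G --> l.
Proof.
move=> GP Gc.
have Gce : cauchy_ex G by apply/cauchyP.
pose Gr := (@complex.Re R) @ G; pose Gi := (@complex.Im R) @ G.
have GrP : ProperFilter Gr by apply: fmap_proper_filter.
have GiP : ProperFilter Gi by apply: fmap_proper_filter.
have Grc : cauchy Gr.
  apply/(cauchyP Gr) => eps eps0.
  have [z hz] : exists z, G (ball z (eps%:C)) by apply: Gce; rewrite ltcR.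
  exists (complex.Re z).
  change (G ((@complex.Re R) @^-1` ball (complex.Re z) eps)).
  apply: (filterS _ hz) => w; rewrite /ball /= => h.
  rewrite -ltcR; apply: le_lt_trans h.
  have -> : complex.Re z - complex.Re w = complex.Re (z - w) by symmetry; apply: ReB.
  exact: normc_geRe.
have Gic : cauchy Gi.
  apply/(cauchyP Gi) => eps eps0.
  have [z hz] : exists z, G (ball z (eps%:C)) by apply: Gce; rewrite ltcR.
  exists (complex.Im z).
  change (G ((@complex.Im R) @^-1` ball (complex.Im z) eps)).
  apply: (filterS _ hz) => w; rewrite /ball /= => h.
  rewrite -ltcR; apply: le_lt_trans h.
  have -> : complex.Im z - complex.Im w = complex.Im (z - w) by symmetry; apply: ImB.
  exact: normc_geIm.
have [r Grr] := (cvg_ex Gr).1 (@R_complete R Gr GrP Grc).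
have [i0 Gii] := (cvg_ex Gi).1 (@R_complete R Gi GiP Gic).
exists (r +i* i0).
move=> P /nbhs_ballP [e e0 hP].
have e0' : (0 : complex R) < (e : complex R) := e0.
move: e0'; rewrite ltcE => /andP [/eqP eIm er].
have ee := complex_eta eIm.
set ep := complex.Re e in er ee.
have ep2 : 0 < ep / 2 by rewrite divr_gt0.
have h1 : G ((@complex.Re R) @^-1` ball r (ep / 2)) := Grr _ (nbhsx_ballx r _ ep2).
have h2 : G ((@complex.Im R) @^-1` ball i0 (ep / 2)) := Gii _ (nbhsx_ballx i0 _ ep2).
change (G P); apply: (filterS _ (filterI h1 h2)) => w [hw1 hw2]; apply: hP.
move: hw1 hw2; rewrite /ball /= => hw1 hw2.
apply: le_lt_trans (normc_leReIm _) _.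
rewrite ee ltcR.
have -> : complex.Re (r +i* i0 - w) = r - complex.Re w by rewrite (ReB (r +i* i0) w).
have -> : complex.Im (r +i* i0 - w) = i0 - complex.Im w by rewrite (ImB (r +i* i0) w).
by rewrite (splitr ep) ltrD.
Qed.

End Cplx.

Lemma Kc_scalar (R : realType) (b : bool) : forall G : set_system (scalar_field R b),
  ProperFilter G -> cauchy G -> exists l : scalar_field R b, G --> l.
Proof.
case: b; first exact: Kc_real.
exact: Kc_cplx.
Qed.


Lemma seq_trunc_xs (K : numFieldType) (E F : completeNormedModType K) (t : rep E F) :
  seq_trunc (size t) (rep_xs t) = rep_xs t.
Proof.
apply: funext => k; rewrite /seq_trunc; case: ifP => // /negbT; rewrite -leqNgt => hk.
by rewrite /rep_xs nth_default // size_map.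
Qed.

Lemma seq_trunc_ys (K : numFieldType) (E F : completeNormedModType K) (t : rep E F) :
  seq_trunc (size t) (rep_ys t) = rep_ys t.
Proof.
apply: funext => k; rewrite /seq_trunc; case: ifP => // /negbT; rewrite -leqNgt => hk.
by rewrite /rep_ys nth_default // size_map.
Qed.

Theorem proposition2p5 (R : realType) (b : bool)
  (X Y : seq_class (scalar_field R b)) :
  alpha_reasonable_quasinorm X Y ->
  linearly_stable X -> linearly_stable Y ->
  finitely_injective X -> finitely_injective Y ->
  alpha_tensor_quasinorm X Y.
Proof.
move=> hr LX LY IX IY; split => //; first exact: uniform_gen.
move=> E F s; split.
  move=> M N i j s' c _ _ hi hj hteq hs'.
  have hb1 : bounded_by i 1 by split => // x; rewrite hi mul1r.
  have hb2 : bounded_by j 1 by split => // x; rewrite hj mul1r.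
  have := uniform_gen LX LY hb1 hb2 hs'; rewrite !mul1r => h.
  exact: alpha_le_teq h hteq.
move=> c hs e e0.
have [t [ht hc]] := hs e e0.
have [M [i [f [fdM hi hf]]]] := @fin_sub_aux _ E (map fst t) (@Kc_scalar R b).
have [N [j [g [fdN hj hg]]]] := @fin_sub_aux _ F (map snd t) (@Kc_scalar R b).
pose s' := mkseq (fun k => (f k, g k)) (size t).
have hmap : rep_map i j s' = t.
  rewrite /rep_map /s' /mkseq -map_comp -/(mkseq _ (size t)); apply: (@eq_from_nth _ (0, 0)); rewrite ?size_mkseq // => k hk.
  rewrite nth_mkseq //= hf hg !(nth_map (0, 0)) //.
  by case: (nth _ t k).
have hsz : size s' = size t by rewrite size_mkseq.
exists M, N, i, j, s'; split => //.
  by rewrite hmap; apply: teq_sym.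
move=> e' e'0; exists s'; split; first exact: teq_refl.
apply: (le_lt_trans (y := rep_cost X Y t)).
  rewrite /rep_cost; apply: ler_pM; try apply: sc_norm_ge0; try apply: rep_xs_mem; try apply: rep_ys_mem.
    have := IX _ _ i hi (size t) (rep_xs s').
    by rewrite -hsz seq_trunc_xs -(rep_xs_map i j) hsz hmap seq_trunc_xs.
  have := IY _ _ j hj (size t) (rep_ys s').
  by rewrite -hsz seq_trunc_ys -(rep_ys_map i j) hsz hmap seq_trunc_ys.
apply: lt_trans hc _.
by rewrite ltrDl.
Qed.
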